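(* Let $d\geq 2$, let $\mathsf{B}$ be a stacked $(d+1)$-ball on $n$ vertices and let $\mathsf{K}=\partial\mathsf{B}$. Then $\tau(\mathcal{F}(\mathsf{B}))\leq \frac{1}{d+2}n$ and $\tau(\mathcal{F}(\mathsf{K}))\leq \frac{2}{d+2}n$. Furthermore, $\mathcal{F}(\mathsf{B})$ and $\mathcal{F}(\mathsf{K})$ are both $2$-colorable.
   Context: An abstract $m$-simplex $\Delta(V)$ is the set of all subsets of a set $V$ of size $m+1$. A simplicial complex $\mathsf{B}$ is a stacked $(d+1)$-ball if there are abstract $(d+1)$-simplices $\Delta_1,\dots,\Delta_m$ with $\mathsf{B}=\bigcup_{i=1}^m\Delta_i$ such that, writing $\mathsf{B}_k=\bigcup_{i=1}^k\Delta_i$, for every $1\leq k\leq m-1$ the intersection $\mathsf{B}_k\cap\Delta_{k+1}$ is an abstract $d$-simplex whose maximal face is a $d$-dimensional face of both $\partial\mathsf{B}_k$ and $\Delta_{k+1}$. The boundary $\partial\mathsf{B}$ of such a ball is the subcomplex generated by the $d$-dimensional faces contained in exactly one $(d+1)$-simplex $\Delta_i$. $\mathcal{F}(\cdot)$ is the hypergraph of facets (inclusion-maximal faces); $\tau$ is the minimum size of a vertex set meeting every hyperedge; $2$-colorable means the vertices can be $2$-colored with no monochromatic hyperedge. *)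

(* Defs.v *)
From mathcomp Require Import all_boot.
Set Implicit Arguments. Unset Strict Implicit. Unset Printing Implicit Defensive.

Section StackedBalls.
Variable V : finType.

Definition gen (F : seq {set V}) : {set {set V}} :=
  [set S : {set V} | has (fun D : {set V} => S \subset D) F].

Definition facets (K : {set {set V}}) : {set {set V}} :=
  [set S in K | [forall T in K, (S \subset T) ==> (T == S)]].

Definition boundary_ridges (d : nat) (F : seq {set V}) : {set {set V}} :=
  [set S : {set V} | (#|S| == d.+1) && (count (fun D : {set V} => S \subset D) F == 1)].

Definition boundary (d : nat) (F : seq {set V}) : {set {set V}} :=
  [set S : {set V} | [exists T in boundary_ridges d F, S \subset T]].

(* D = [:: Delta_1; ...; Delta_m] witnesses that gen D is a stacked (d+1)-ball. *)
Definition stacked_ball (d : nat) (D : seq {set V}) : Prop :=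
  [/\ 0 < size D,
      all (fun X : {set V} => #|X| == d.+2) D &
      forall k, 1 <= k < size D ->
        exists sigma : {set V},
          [/\ #|sigma| = d.+1,
              sigma \subset nth set0 D k,
              sigma \in boundary d (take k D) &
              gen (take k D) :&: gen [:: nth set0 D k] = powerset sigma]].

Definition transversal (H : {set {set V}}) (T : {set V}) : bool :=
  [forall e in H, [exists x in e, x \in T]].

Definition tau (H : {set {set V}}) : nat :=
  \big[minn/#|V|]_(T : {set V} | transversal H T) #|T|.

Definition two_colorable (H : {set {set V}}) : Prop :=
  exists c : V -> bool,
    forall e, e \in H -> exists x, exists y, [/\ x \in e, y \in e & c x != c y].

End StackedBalls.

(* Main.v *)
Require Import Defs.
From mathcomp Require Import all_boot.
From mathcomp Require Import zify.
Set Implicit Arguments. Unset Strict Implicit. Unset Printing Implicit Defensive.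

Section Proof.
Variable V : finType.
Variable d : nat.

Lemma inj_index (X : {set V}) : #|X| = d.+2 ->
  exists col : V -> 'I_d.+2, {in X &, injective col}.
Proof.
move=> hX.
exists (fun x => inord (index x (enum X))).
move=> x y hx hy /(congr1 val).
have hx' : index x (enum X) < d.+2 by rewrite -hX cardE index_mem mem_enum.
have hy' : index y (enum X) < d.+2 by rewrite -hX cardE index_mem mem_enum.
rewrite /= !inordK // => e.
have hxe : x \in enum X by rewrite mem_enum.
have hye : y \in enum X by rewrite mem_enum.
by rewrite -(nth_index x hxe) e (nth_index x hye).
Qed.

Lemma ext_step (P : seq {set V}) (X sigma : {set V}) (col : V -> 'I_d.+2) :
  #|X| = d.+2 -> #|sigma| = d.+1 -> sigma \subset X ->
  gen P :&: gen [:: X] = powerset sigma ->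
  (forall Y, Y \in P -> {in Y &, injective col}) ->
  exists col' : V -> 'I_d.+2, forall Y, Y \in rcons P X -> {in Y &, injective col'}.
Proof.
move=> hX hs ssX hI hcol.
have sgen : sigma \in gen P.
  have : sigma \in powerset sigma by rewrite powersetE.
  by rewrite -hI inE => /andP[].
have [Y0 Y0P sY0] : exists2 Y0, Y0 \in P & sigma \subset Y0.
  by move: sgen; rewrite inE => /hasP.
have : #|X :\: sigma| = 1.
  by rewrite cardsD (setIidPr ssX) hX hs subSnn.
move/eqP/cards1P => [v hv].
have : v \in X :\: sigma by rewrite hv set11.
rewrite inE => /andP[vs vX].
have vnot : forall Y, Y \in P -> v \notin Y.
  move=> Y YP; apply/negP => vY.
  have : [set v] \in gen P :&: gen [:: X].
    rewrite inE; apply/andP; split; rewrite inE; apply/hasP.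
      by exists Y => //; rewrite sub1set.
    by exists X; rewrite ?mem_head ?sub1set.
  by rewrite hI powersetE sub1set (negbTE vs).
have inj_s : {in sigma &, injective col}.
  by move=> x y hx hy; apply: (hcol Y0) => //; apply: (subsetP sY0).
have [c0 hc0] : exists c0, c0 \notin col @: sigma.
  case: (pickP (fun c => c \notin col @: sigma)) => [c0 hc0|h]; first by exists c0.
  exfalso.
  have : [set: 'I_d.+2] \subset col @: sigma.
    by apply/subsetP => c _; move: (h c); rewrite /= => /negbFE.
  move/subset_leq_card; rewrite cardsT card_ord => H.
  by have := leq_trans H (leq_imset_card col sigma); rewrite hs ltnn.
exists (fun x => if x == v then c0 else col x).
have neqv : forall x, x \in sigma -> (x == v) = false.
  by move=> x xs; apply/negbTE; apply: contraNneq vs => <-.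
move=> Y; rewrite mem_rcons inE => /orP[/eqP -> | YP].
- have xX : forall x, x \in X -> x = v \/ x \in sigma.
    move=> x xX; case: (boolP (x \in sigma)) => xs; [by right|left].
    by apply/set1P; rewrite -hv inE xs xX.
  move=> x y /xX [->|xs] /xX [->|ys].
  + by [].
  + rewrite eqxx neqv // => e; exfalso; move/negP: hc0; apply; rewrite e; exact: imset_f.
  + rewrite eqxx neqv // => e; exfalso; move/negP: hc0; apply; rewrite -e; exact: imset_f.
  + rewrite !neqv //; exact: inj_s.
- move=> x y xY yY /=.
  have -> : (x == v) = false by apply/negbTE; apply: contraNneq (vnot Y YP) => <-.
  have -> : (y == v) = false by apply/negbTE; apply: contraNneq (vnot Y YP) => <-.
  exact: (hcol Y YP x y xY yY).
Qed.

Lemma coloring (D : seq {set V}) : stacked_ball d D ->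
  exists col : V -> 'I_d.+2, forall X, X \in D -> {in X &, injective col}.
Proof.
case=> hsz hall hstep.
have hcard : forall X, X \in D -> #|X| = d.+2 by move=> X /(allP hall) /eqP.
suff : forall k, k <= size D -> exists col : V -> 'I_d.+2,
    forall X, X \in take k D -> {in X &, injective col}.
  by move/(_ _ (leqnn _)); rewrite take_size.
elim=> [|k IH] hk.
  by exists (fun _ => ord0) => X; rewrite take0.
rewrite (take_nth set0 hk).
case: k IH hk => [|k] IH hk.
  have [col hcol] := inj_index (hcard _ (mem_nth set0 hk)).
  by exists col => X; rewrite take0 mem_seq1 => /eqP ->.
have [col hcol] := IH (ltnW hk).
have [sigma [h1 h2 _ h4]] := hstep k.+1 hk.
exact: (ext_step (hcard _ (mem_nth set0 hk)) h1 h2 h4 hcol).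
Qed.

Lemma hit (col : V -> 'I_d.+2) (e : {set V}) (J : {set 'I_d.+2}) :
  {in e &, injective col} -> d.+2 < #|e| + #|J| -> exists2 x, x \in e & col x \in J.
Proof.
move=> inj hlt.
case: (pickP (fun x => (x \in e) && (col x \in J))) => [x /andP[]|h]; first by exists x.
exfalso.
have : col @: e \subset ~: J.
  apply/subsetP => c /imsetP [x xe ->]; rewrite inE; apply/negP => cJ.
  by move: (h x); rewrite /= xe cJ.
move/subset_leq_card; rewrite (card_in_imset inj) => H.
have := cardsC J; rewrite card_ord => H2.
have H3 : #|e| + #|J| <= #|J| + #|~: J| by rewrite addnC leq_add2l.
rewrite H2 in H3; by rewrite ltnNge H3 in hlt.
Qed.

Lemma facet_gen (D : seq {set V}) e : e \in facets (gen D) -> e \in D.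
Proof.
rewrite inE => /andP[eg /forall_inP hmax].
move: (eg); rewrite inE => /hasP [X XD eX].
have Xg : X \in gen D by rewrite inE; apply/hasP; exists X.
by have /eqP <- := implyP (hmax X Xg) eX.
Qed.

Lemma facet_bd (D : seq {set V}) e : e \in facets (boundary d D) ->
  #|e| = d.+1 /\ exists2 X, X \in D & e \subset X.
Proof.
rewrite inE => /andP[eb /forall_inP hmax].
move: (eb); rewrite inE => /exists_inP [T Tr eT].
have Tb : T \in boundary d D by rewrite inE; apply/exists_inP; exists T.
have /eqP Te := implyP (hmax T Tb) eT.
move: Tr; rewrite Te inE => /andP[/eqP hc hcount]; split=> //.
have : has (fun X : {set V} => e \subset X) D by rewrite has_count (eqP hcount).
by case/hasP => X XD eX; exists X.
Qed.

Lemma in_bigcup (D : seq {set V}) X x : X \in D -> x \in X -> x \in \bigcup_(Y <- D) Y.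
Proof.
elim: D => // Y D IH XD xX; rewrite big_cons inE.
move: XD; rewrite inE => /orP[/eqP XY|XD]; first by rewrite -XY xX.
by rewrite IH ?orbT.
Qed.

Lemma tau_le (H : {set {set V}}) T : Defs.transversal H T -> tau H <= #|T|.
Proof.
move=> hT; rewrite /tau.
have : T \in index_enum {set V} by rewrite mem_index_enum.
elim: (index_enum _) => // i r IH; rewrite inE big_cons; case/orP => [/eqP <-|/IH h].
  by rewrite hT; exact: geq_minl.
case: (Defs.transversal H i) => //; exact: leq_trans (geq_minr _ _) h.
Qed.

Lemma sum_classes (A : {set V}) (col : V -> 'I_d.+2) :
  \sum_(j : 'I_d.+2) #|[set x in A | col x == j]| = #|A|.
Proof.
rewrite -sum1_card (partition_big col xpredT) //=.
apply: eq_bigr => j _; rewrite -sum1_card; apply: eq_bigl => x; by rewrite inE.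
Qed.

End Proof.

Theorem proposition3p2 (V : finType) (d : nat) (D : seq {set V}) :
  2 <= d -> stacked_ball d D ->
  let n := #|\bigcup_(X <- D) X| in
  [/\ (d + 2) * tau (facets (gen D)) <= n,
      (d + 2) * tau (facets (boundary d D)) <= 2 * n,
      two_colorable (facets (gen D)) &
      two_colorable (facets (boundary d D))].
Proof.
move=> hd hball n.
have [col hcol] := coloring hball.
case: hball => _ hall _.
have hcard : forall X, X \in D -> #|X| = d.+2 by move=> X /(allP hall) /eqP.
pose U := \bigcup_(X <- D) X.
pose cl j := [set x in U | col x == j].
have hsum : \sum_j #|cl j| = n := sum_classes U col.
have key : forall (e : {set V}) (J : {set 'I_d.+2}), (exists2 X, X \in D & e \subset X) -> d.+2 < #|e| + #|J| ->
    exists2 x, x \in e & (x \in U) && (col x \in J).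
  move=> e J [X XD eX] hlt.
  have [x xe xJ] := hit (J:=J) (e:=e) (col:=col)
    (fun x y hx hy => hcol X XD x y (subsetP eX x hx) (subsetP eX y hy)) hlt.
  by exists x => //; rewrite xJ andbT; exact: in_bigcup XD (subsetP eX x xe).
have fg : forall e, e \in facets (gen D) -> (exists2 X, X \in D & e \subset X) /\ #|e| = d.+2.
  by move=> e /facet_gen eD; split; [exists e | exact: hcard].
have fb : forall e, e \in facets (boundary d D) -> (exists2 X, X \in D & e \subset X) /\ #|e| = d.+1.
  by move=> e /facet_bd [h1 h2]; split.
have [j1 _ hj1] := @arg_minnP _ ord0 xpredT (fun j => #|cl j|) isT.
have [j0 hj0] : exists j0 : 'I_d.+2, j0 != j1.
  case: (eqVneq j1 ord0) => h.
  - exists (inord 1); rewrite h; apply/eqP => /(congr1 val); rewrite /= inordK //.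
  - by exists ord0; rewrite eq_sym.
have [j2 hj2ne hj2] := @arg_minnP _ j0 (fun j => j != j1) (fun j => #|cl j|) hj0.
have hab : #|cl j1| <= #|cl j2| by apply: hj1.
have hsum2 : d.+1 * #|cl j2| + #|cl j1| <= n.
  rewrite -hsum (bigD1 j1) //= [d.+1 * _ + _]addnC leq_add2l.
  have : \sum_(j < d.+2) #|cl j2| = #|cl j2| * d.+2 by rewrite big_const_ord iter_addn_0.
  rewrite (bigD1 j1) //= => hc.
  have -> : d.+1 * #|cl j2| = \sum_(j < d.+2 | j != j1) #|cl j2|.
    apply/eqP; rewrite -(eqn_add2l #|cl j2|) hc; apply/eqP; lia.
  by apply: leq_sum => j hj; apply: hj2.
have o1 : (ord0 : 'I_d.+2) != inord 1.
  by apply/eqP => /(congr1 val); rewrite /= inordK.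
pose J1 : {set 'I_d.+2} := [set ord0; inord 1].
have cJ1 : #|J1| = 2 by rewrite cards2 o1.
have cJ2 : #|~: J1| = d by have := cardsC J1; rewrite card_ord cJ1; lia.
have two : forall e : {set V}, (exists2 X, X \in D & e \subset X) -> d.+1 <= #|e| ->
    exists x y, [/\ x \in e, y \in e & (col x \in J1) != (col y \in J1)].
  move=> e hX he.
  have hl1 : d.+2 < #|e| + #|J1| by rewrite cJ1; lia.
  have hl2 : d.+2 < #|e| + #|~: J1| by rewrite cJ2; lia.
  have [x xe /andP[_ xJ]] := key e J1 hX hl1.
  have [y ye /andP[_ yJ]] := key e (~: J1) hX hl2.
  exists x, y; split => //; rewrite xJ; by rewrite inE in yJ.
split.
- have T1 : Defs.transversal (facets (gen D)) (cl j1).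
    apply/forall_inP => e he; have [hX hc] := fg e he.
    have hl : d.+2 < #|e| + #|[set j1]| by rewrite cards1 hc addn1.
    have [x xe /andP[xU xJ]] := key e [set j1] hX hl.
    apply/exists_inP; exists x => //; rewrite inE xU /=; by rewrite inE in xJ.
  have := tau_le T1 => ht.
  have : (d + 2) * tau (facets (gen D)) <= (d+2) * #|cl j1| by rewrite leq_mul2l ht orbT.
  move=> h; apply: (leq_trans h); nia.
- have T2 : Defs.transversal (facets (boundary d D)) (cl j1 :|: cl j2).
    apply/forall_inP => e he; have [hX hc] := fb e he.
    have hl : d.+2 < #|e| + #|[set j1; j2]| by rewrite cards2 hc eq_sym hj2ne /=; lia.
    have [x xe /andP[xU xJ]] := key e [set j1; j2] hX hl.
    apply/exists_inP; exists x => //.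
    by move: xJ; rewrite !inE xU /= => /orP[->|->]; rewrite ?orbT.
  have := tau_le T2 => ht.
  have hU := (leq_card_setU (cl j1) (cl j2)).1.
  have : (d + 2) * tau (facets (boundary d D)) <= (d+2) * (#|cl j1| + #|cl j2|).
    by rewrite leq_mul2l (leq_trans ht hU) orbT.
  move=> h; apply: (leq_trans h); nia.
- exists (fun x => col x \in J1) => e he; have [hX hc] := fg e he.
  apply: two => //; lia.
- exists (fun x => col x \in J1) => e he; have [hX hc] := fb e he.
  apply: two => //; lia.
Qed.
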